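(* Let $A=\sum_{j=1}^\infty E_j$, where $E_j$ are rank-one projections on a separable Hilbert space $H$ and the series converges in the strong operator topology. Let $\xi$ be a sequence whose entries consist of the entries of $\mu=\langle\mu_j\rangle_{j=1}^M$ and of $1-\lambda=\langle1-\lambda_j\rangle_{j=1}^N$ ($0\le M,N\le\infty$), where $0<\mu_j\le\frac12$ and $0<\lambda_j<\frac12$. If $\sum_{j=1}^M\mu_j=\infty$, then $\xi\in\operatorname{Adm}(A)$.
   Context: $\operatorname{Adm}(A)$ is the set of sequences $\xi\in\ell^\infty_+$ such that $A=\sum_j\xi_jP_j$ for some rank-one projections $P_j$ (series converging in the strong operator topology if infinite); admissibility is invariant under permutation of the sequence. *)

(* Defs.v *)
(* the separable (infinite-dimensional) complex Hilbert space is
   modelled concretely as l^2(N; C), with C represented as R * R. *)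
From Stdlib Require Import Reals.
Open Scope R_scope.

Definition C := (R * R)%type.
Definition cmul (z w : C) : C :=
  (fst z * fst w - snd z * snd w, fst z * snd w + snd z * fst w).
Definition cconj (z : C) : C := (fst z, - snd z).
Definition cnorm2 (z : C) : R := fst z * fst z + snd z * snd z.

Definition vec := (nat -> C)%type.
Definition vadd (x y : vec) : vec := fun n => (fst (x n) + fst (y n), snd (x n) + snd (y n)).
Definition vsub (x y : vec) : vec := fun n => (fst (x n) - fst (y n), snd (x n) - snd (y n)).
Definition vzero : vec := fun _ => (0, 0).
Definition vscale (c : C) (x : vec) : vec := fun n => cmul c (x n).
Definition rscale (r : R) (x : vec) : vec := vscale (r, 0) x.

Definition sqnorm_is (x : vec) (l : R) : Prop :=
  infinite_sum (fun n => cnorm2 (x n)) l.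
Definition l2 (x : vec) : Prop := exists l, sqnorm_is x l.
(* <x, y> = c  (linear in x, conjugate-linear in y) *)
Definition inner_is (x y : vec) (c : C) : Prop :=
  infinite_sum (fun n => fst (cmul (x n) (cconj (y n)))) (fst c) /\
  infinite_sum (fun n => snd (cmul (x n) (cconj (y n)))) (snd c).

(* operators are functions vec -> vec; only their values on l^2 matter *)
Definition op := (vec -> vec)%type.

Definition rank_one_proj (P : op) : Prop :=
  exists e : vec, sqnorm_is e 1 /\
    forall v, l2 v -> exists c, inner_is v e c /\ P v = vscale c e.

Fixpoint psum (T : nat -> op) (v : vec) (n : nat) : vec :=
  match n with
  | O => vzero
  | S k => vadd (psum T v k) (T k v)
  end.

Definition norm_cv (u : nat -> vec) (w : vec) : Prop :=
  forall eps, eps > 0 -> exists N, forall n, (n >= N)%nat ->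
    exists l, sqnorm_is (vsub (u n) w) l /\ l < eps.

Definition sot_sum (T : nat -> op) (A : op) : Prop :=
  forall v, l2 v -> norm_cv (psum T v) (A v).

Definition Adm (A : op) (xi : nat -> R) : Prop :=
  (forall j, 0 <= xi j) /\ (exists B, forall j, xi j <= B) /\
  exists P : nat -> op, (forall j, rank_one_proj (P j)) /\
    sot_sum (fun j v => rscale (xi j) (P j v)) A.

(* index sets {1..M}, 0 <= M <= infinity; None = infinity (0-based indices) *)
Definition below (j : nat) (M : option nat) : Prop :=
  match M with None => True | Some m => (j < m)%nat end.

Fixpoint fsum (f : nat -> R) (n : nat) : R :=
  match n with O => 0 | S k => fsum f k + f k end.

Definition diverges (mu : nat -> R) (M : option nat) : Prop :=
  forall B, exists n, (forall j, (j < n)%nat -> below j M) /\ B < fsum mu n.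

Definition merges (xi : nat -> R) (mu : nat -> R) (M : option nat)
    (lam : nat -> R) (N : option nat) : Prop :=
  exists s : nat -> (nat + nat)%type,
    (forall k k', s k = s k' -> k = k') /\
    (forall k, match s k with
               | inl j => below j M /\ xi k = mu j
               | inr j => below j N /\ xi k = 1 - lam j
               end) /\
    (forall j, below j M -> exists k, s k = inl j) /\
    (forall j, below j N -> exists k, s k = inr j).

(* Main.v *)
Require Import Defs.
From Stdlib Require Import Reals Lra Lia Psatz FunctionalExtensionality ClassicalEpsilon.
From Coquelicot Require Import Hierarchy Series.
Open Scope R_scope.
Notation ex_series := (@Series.ex_series R_AbsRing R_NormedModule).

Lemma exs_plus (a b : nat -> R) : ex_series a -> ex_series b -> ex_series (fun n => a n + b n).
Proof. intros. apply (@ex_series_plus R_AbsRing R_NormedModule); auto. Qed.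
Lemma exs_scal (c:R) (a : nat -> R) : ex_series a -> ex_series (fun n => c * a n).
Proof. intros. apply (@ex_series_scal_l R_AbsRing R_NormedModule); auto. Qed.
Lemma exs_le (a b : nat -> R) : (forall n, Rabs (a n) <= b n) -> ex_series b -> ex_series a.
Proof. intros. apply (@ex_series_le R_AbsRing R_CompleteNormedModule a b); auto. Qed.
Lemma exs_ext (a b : nat -> R) : (forall n, a n = b n) -> ex_series a -> ex_series b.
Proof. intros H H1. replace b with a; auto. apply functional_extensionality; auto. Qed.
Lemma Series_ext' (a b : nat -> R) : (forall n, a n = b n) -> Series a = Series b.
Proof. intros H. replace b with a; auto. apply functional_extensionality; auto. Qed.

Lemma Series_lin (a b : R) (f g : nat -> R) : ex_series f -> ex_series g ->
  Series (fun n => a * f n + b * g n) = a * Series f + b * Series g.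
Proof. intros. rewrite Series_plus. rewrite !Series_scal_l. auto.
  apply exs_scal; auto. apply exs_scal; auto. Qed.

Lemma isum_zero : infinite_sum (fun _ => 0) 0.
Proof. intros e He. exists 0%nat. intros. rewrite (sum_eq_R0 _ n); [|auto]. unfold Rdist. rewrite Rminus_0_r, Rabs_R0. lra. Qed.
Lemma Series_zero : Series (fun _ => 0) = 0.
Proof. apply is_series_unique. apply is_series_Reals. apply isum_zero. Qed.

Definition cn (x : vec) n := cnorm2 (x n).
Definition ipr (x y : vec) n := fst (cmul (x n) (cconj (y n))).
Definition ipi (x y : vec) n := snd (cmul (x n) (cconj (y n))).
Definition ip (x y : vec) : (R*R)%type := (Series (ipr x y), Series (ipi x y)).
Definition nn (x : vec) := Series (cn x).

Lemma cn_nonneg x n : 0 <= cn x n.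
Proof. unfold cn, cnorm2. nra. Qed.

Lemma l2_ex x : l2 x -> ex_series (cn x).
Proof. intros [l Hl]. exists l. apply is_series_Reals. exact Hl. Qed.
Lemma ex_l2 x : ex_series (cn x) -> l2 x.
Proof. intros [l Hl]. exists l. apply is_series_Reals. exact Hl. Qed.
Lemma sq_nn x : l2 x -> sqnorm_is x (nn x).
Proof. intros H. apply is_series_Reals. apply Series_correct. apply l2_ex; auto. Qed.
Lemma sq_uniq x l : sqnorm_is x l -> nn x = l.
Proof. intros H. apply is_series_unique. apply is_series_Reals. exact H. Qed.

Lemma ipr_bound x y n : Rabs (ipr x y n) <= (cn x n + cn y n)/2.
Proof. unfold ipr, cn, cnorm2, cmul, cconj; destruct (x n) as [a b], (y n) as [c d]; simpl. apply Rabs_le. pose proof (Rle_0_sqr (a+c)); pose proof (Rle_0_sqr (b-d)); pose proof (Rle_0_sqr (a-c)); pose proof (Rle_0_sqr (b+d)); pose proof (Rle_0_sqr (a+d)); pose proof (Rle_0_sqr (b-c)); pose proof (Rle_0_sqr (a-d)); pose proof (Rle_0_sqr (b+c)); unfold Rsqr in *. split; nra. Qed.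
Lemma ipi_bound x y n : Rabs (ipi x y n) <= (cn x n + cn y n)/2.
Proof. unfold ipi, cn, cnorm2, cmul, cconj; destruct (x n) as [a b], (y n) as [c d]; simpl. apply Rabs_le. pose proof (Rle_0_sqr (a+c)); pose proof (Rle_0_sqr (b-d)); pose proof (Rle_0_sqr (a-c)); pose proof (Rle_0_sqr (b+d)); pose proof (Rle_0_sqr (a+d)); pose proof (Rle_0_sqr (b-c)); pose proof (Rle_0_sqr (a-d)); pose proof (Rle_0_sqr (b+c)); unfold Rsqr in *. split; nra. Qed.

Lemma ex_half x y : l2 x -> l2 y -> ex_series (fun n => (cn x n + cn y n)/2).
Proof. intros. apply exs_ext with (fun n => /2 * cn x n + /2 * cn y n).
  intros n; cbv beta; field. apply exs_plus; apply exs_scal; apply l2_ex; auto. Qed.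

Lemma ex_ipr x y : l2 x -> l2 y -> ex_series (ipr x y).
Proof. intros. eapply exs_le. apply ipr_bound. apply ex_half; auto. Qed.
Lemma ex_ipi x y : l2 x -> l2 y -> ex_series (ipi x y).
Proof. intros. eapply exs_le. apply ipi_bound. apply ex_half; auto. Qed.

Lemma inner_ip x y : l2 x -> l2 y -> inner_is x y (ip x y).
Proof. intros. split; simpl; apply is_series_Reals; apply Series_correct.
  apply ex_ipr; auto. apply ex_ipi; auto. Qed.

Lemma l2_vadd x y : l2 x -> l2 y -> l2 (vadd x y).
Proof. intros. apply ex_l2. eapply exs_le with (fun n => 2 * cn x n + 2 * cn y n).
  intros n. unfold cn, cnorm2, vadd; destruct (x n) as [a b], (y n) as [c d]; simpl. pose proof (Rle_0_sqr (a-c)); pose proof (Rle_0_sqr (b-d)); pose proof (Rle_0_sqr (a+c)); pose proof (Rle_0_sqr (b+d)); unfold Rsqr in *. rewrite Rabs_right; nra.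
  apply exs_plus; apply exs_scal; apply l2_ex; auto. Qed.
Lemma l2_vsub x y : l2 x -> l2 y -> l2 (vsub x y).
Proof. intros. apply ex_l2. eapply exs_le with (fun n => 2 * cn x n + 2 * cn y n).
  intros n. unfold cn, cnorm2, vsub; destruct (x n) as [a b], (y n) as [c d]; simpl. pose proof (Rle_0_sqr (a-c)); pose proof (Rle_0_sqr (b-d)); pose proof (Rle_0_sqr (a+c)); pose proof (Rle_0_sqr (b+d)); unfold Rsqr in *. rewrite Rabs_right; nra.
  apply exs_plus; apply exs_scal; apply l2_ex; auto. Qed.
Lemma l2_vscale c x : l2 x -> l2 (vscale c x).
Proof. intros. apply ex_l2. eapply exs_le with (fun n => cnorm2 c * cn x n).
  intros n. unfold cn, cnorm2, vscale, cmul; destruct c as [a b], (x n) as [c d]; simpl. rewrite Rabs_right. nra. pose proof (Rle_0_sqr (a*c-b*d)); pose proof (Rle_0_sqr (a*d+b*c)); unfold Rsqr in *. nra.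
  apply exs_scal; apply l2_ex; auto. Qed.
Lemma l2_vzero : l2 vzero.
Proof. apply ex_l2. apply exs_ext with (fun n => 0 * 0). intros; unfold cn, cnorm2, vzero; simpl; ring.
  apply exs_scal with (a := fun _ => 0). exists 0. apply is_series_Reals.
  intros e He. exists 0%nat. intros. rewrite (sum_eq_R0 _ n); [|auto]. unfold Rdist. rewrite Rminus_0_r, Rabs_R0. lra. Qed.

Lemma ip_addl x y z : l2 x -> l2 y -> l2 z ->
  ip (vadd x y) z = (fst (ip x z) + fst (ip y z), snd (ip x z) + snd (ip y z)).
Proof. intros. unfold ip; simpl. f_equal; rewrite <- Series_plus;
  try (apply ex_ipr; auto); try (apply ex_ipi; auto); apply Series_ext'; intros n;
  unfold ipr, ipi, vadd, cmul, cconj; simpl; ring. Qed.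
Lemma ip_scall a x z : l2 x -> l2 z -> ip (vscale a x) z = cmul a (ip x z).
Proof. intros. unfold ip; unfold cmul at 1; simpl. f_equal.
  replace (fst a * Series (ipr x z) - snd a * Series (ipi x z)) with (fst a * Series (ipr x z) + (- snd a) * Series (ipi x z)) by ring.
  rewrite <- Series_lin; try (apply ex_ipr; auto); try (apply ex_ipi; auto).
  apply Series_ext'; intros n; unfold ipr, ipi, vscale, cmul, cconj; simpl; ring.
  replace (fst a * Series (ipi x z) + snd a * Series (ipr x z)) with (fst a * Series (ipi x z) + snd a * Series (ipr x z)) by ring.
  rewrite <- Series_lin; try (apply ex_ipr; auto); try (apply ex_ipi; auto).
  apply Series_ext'; intros n; unfold ipr, ipi, vscale, cmul, cconj; simpl; ring. Qed.
Lemma ip_sym x y : ip y x = cconj (ip x y).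
Proof. unfold ip, cconj; simpl. f_equal. apply Series_ext'; intros n; unfold ipr; simpl; ring.
  rewrite <- Series_opp. apply Series_ext'; intros n; unfold ipi; simpl; ring. Qed.
Lemma ip_addr x y z : l2 x -> l2 y -> l2 z ->
  ip z (vadd x y) = (fst (ip z x) + fst (ip z y), snd (ip z x) + snd (ip z y)).
Proof. intros. rewrite (ip_sym (vadd x y) z), ip_addl, (ip_sym z x), (ip_sym z y); auto.
  unfold cconj; simpl. f_equal; ring. Qed.
Lemma ip_scalr a x z : l2 x -> l2 z -> ip z (vscale a x) = cmul (cconj a) (ip z x).
Proof. intros. rewrite (ip_sym (vscale a x) z), ip_scall, (ip_sym z x); auto.
  unfold cconj, cmul; simpl. f_equal; ring. Qed.
Lemma ip_self x : l2 x -> ip x x = (nn x, 0).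
Proof. intros. unfold ip, nn. f_equal. apply Series_ext'; intros n; unfold ipr, cn, cnorm2, cmul, cconj; simpl; ring.
  rewrite <- Series_zero. apply Series_ext'; intros n; unfold ipi; simpl; ring. Qed.

Lemma nn_nonneg x : l2 x -> 0 <= nn x.
Proof. intros. unfold nn. rewrite <- Series_zero.
  apply Series_le. intros; split; [lra| apply cn_nonneg]. apply l2_ex; auto. Qed.

Lemma nn_le x y : l2 y -> (forall n, cn x n <= cn y n) -> l2 x /\ nn x <= nn y.
Proof. intros Hy H. assert (l2 x). apply ex_l2. eapply exs_le. intros n. rewrite Rabs_right. apply H.
  apply Rle_ge, cn_nonneg. apply l2_ex; auto. split; auto. apply Series_le.
  intros; split; auto. apply cn_nonneg. apply l2_ex; auto. Qed.

Lemma sum_ge_term a n : (forall k, 0 <= a k) -> a n <= sum_f_R0 a n.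
Proof. intros H. destruct n; simpl. lra. pose proof (cond_pos_sum a n H). lra. Qed.

Lemma nn0 x : l2 x -> nn x = 0 -> forall n, x n = (0,0).
Proof. intros Hx H0 n.
  pose proof (sq_nn x Hx) as S. rewrite H0 in S.
  assert (cn x n <= 0).
  { eapply Rle_trans. apply (sum_ge_term (cn x) n). apply cn_nonneg.
    apply sum_incr. exact S. apply cn_nonneg. }
  unfold cn, cnorm2 in H. destruct (x n) as [a b]; simpl in *. f_equal; nra. Qed.

Lemma nn_vadd x y : l2 x -> l2 y -> nn (vadd x y) = nn x + nn y + 2 * fst (ip x y).
Proof. intros. unfold nn, ip; simpl. rewrite <- (Series_scal_l 2).
  rewrite <- (Series_plus (cn x) (cn y)) by (apply l2_ex; auto).
  rewrite <- Series_plus by (try (apply exs_plus; apply l2_ex; auto); apply exs_scal; apply ex_ipr; auto).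
  apply Series_ext'; intros n; unfold cn, ipr, vadd, cnorm2, cmul, cconj; simpl; ring. Qed.
Lemma nn_vscale c x : l2 x -> nn (vscale c x) = cnorm2 c * nn x.
Proof. intros. unfold nn. rewrite <- Series_scal_l. apply Series_ext'; intros n;
  unfold cn, vscale, cnorm2, cmul; simpl; ring. Qed.
Lemma nn_vsub_le x y : l2 x -> l2 y -> nn (vsub x y) <= 2 * nn x + 2 * nn y.
Proof. intros. unfold nn. rewrite <- !Series_scal_l.
  rewrite <- Series_plus by (apply exs_scal; apply l2_ex; auto).
  apply Series_le. intros n; split. apply cn_nonneg.
  unfold cn, vsub, cnorm2; destruct (x n) as [a b], (y n) as [c d]; simpl.
  pose proof (Rle_0_sqr (a+c)); pose proof (Rle_0_sqr (b+d)); unfold Rsqr in *; nra.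
  apply exs_plus; apply exs_scal; apply l2_ex; auto. Qed.
Lemma Rabs_le_inv a b : Rabs a <= b -> -b <= a <= b.
Proof. intros. unfold Rabs in H. destruct (Rcase_abs a); split; lra. Qed.

Lemma Series_mono (a b : nat -> R) : ex_series a -> ex_series b -> (forall n, a n <= b n) -> Series a <= Series b.
Proof. intros Ha Hb H.
  assert (0 <= Series (fun n => b n - a n)).
  { rewrite <- Series_zero. apply Series_le. intros; specialize (H n); split; lra.
    apply exs_ext with (fun n => 1 * b n + (-1) * a n). intros; ring.
    apply exs_plus; apply exs_scal; auto. }
  rewrite Series_minus in H0; auto. lra. Qed.

Lemma ipr_half x y : l2 x -> l2 y -> Rabs (fst (ip x y)) <= (nn x + nn y)/2.
Proof. intros. unfold ip, nn; simpl.
  assert (E : (Series (cn x) + Series (cn y))/2 = Series (fun n => (cn x n + cn y n)/2)).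
  { rewrite <- (Series_plus (cn x) (cn y)). 2,3: apply l2_ex; auto.
    replace ((Series (fun n : nat => cn x n + cn y n))/2) with (/2 * Series (fun n : nat => cn x n + cn y n)) by (unfold Rdiv; ring).
    rewrite <- Series_scal_l. apply Series_ext'; intros; unfold Rdiv; ring. }
  rewrite E. apply Rabs_le. split.
  - rewrite <- Series_opp. apply Series_mono.
    apply exs_ext with (fun n => (-1) * ((cn x n + cn y n)/2)). intros; ring. apply exs_scal, ex_half; auto.
    apply ex_ipr; auto. intros n. pose proof (ipr_bound x y n). apply Rabs_le_inv in H1. lra.
  - apply Series_mono. apply ex_ipr; auto. apply ex_half; auto.
    intros n. pose proof (ipr_bound x y n). apply Rabs_le_inv in H1. lra.
Qed.

Lemma unit_l2 x : sqnorm_is x 1 -> l2 x.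
Proof. intros H. exists 1; auto. Qed.
Lemma unit_nn x : sqnorm_is x 1 -> nn x = 1.
Proof. apply sq_uniq. Qed.

Lemma decomp g q : sqnorm_is g 1 -> sqnorm_is q 1 ->
 exists q' u c d, l2 q' /\ l2 u /\ nn q' = 1 /\ ip u q' = (0,0) /\ (0 < d -> nn u = 1) /\
   0 <= c /\ 0 <= d /\ c*c+d*d = 1 /\
   (forall n, g n = vadd (vscale (c,0) q') (vscale (d,0) u) n) /\
   (forall v, l2 v -> forall n, vscale (ip v q') q' n = vscale (ip v q) q n) /\
   (forall v, l2 v -> cnorm2 (ip v q') = cnorm2 (ip v q)).
Proof.
  intros Hg Hq. pose proof (unit_l2 _ Hg) as Lg. pose proof (unit_l2 _ Hq) as Lq.
  pose proof (unit_nn _ Hg) as Ng. pose proof (unit_nn _ Hq) as Nq.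
  destruct (ip g q) as [a b] eqn:Egq.
  set (m := sqrt (a*a+b*b)).
  assert (Hm2 : m*m = a*a+b*b) by (apply sqrt_sqrt; nra).
  assert (Hm0 : 0 <= m) by apply sqrt_pos.
  destruct (Req_dec m 0) as [Hm|Hm].
  -
    assert (a = 0 /\ b = 0) as [-> ->] by (rewrite Hm in Hm2; split; nra).
    exists q, g, 0, 1. repeat split; auto.
    1,2,3: lra.
    + intros n. unfold vadd, vscale, cmul; simpl. destruct (g n), (q n); simpl; f_equal; ring.
  - assert (Hmp : 0 < m) by lra.
    set (ph := (a/m, b/m)).
    assert (Hph : cnorm2 ph = 1).
    { unfold cnorm2, ph; simpl. replace (a/m*(a/m)+ b/m*(b/m)) with ((a*a+b*b)/(m*m)) by (field; lra). rewrite <- Hm2. field. lra. }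
    set (q' := vscale ph q).
    assert (Lq' : l2 q') by (apply l2_vscale; auto).
    assert (Nq' : nn q' = 1) by (unfold q'; rewrite nn_vscale, Hph, Nq; auto; ring).
    assert (Egq' : ip g q' = (m, 0)).
    { unfold q'. rewrite ip_scalr, Egq; auto. unfold cmul, cconj, ph; simpl. f_equal.
      replace (a/m*a - - (b/m)*b) with ((a*a+b*b)/m) by (field; lra). rewrite <- Hm2. field. lra. field. lra. }
    assert (Eqq : ip q' q' = (1, 0)) by (rewrite ip_self, Nq'; auto).
    set (w0 := vadd g (vscale (-m,0) q')).
    assert (Lw0 : l2 w0) by (apply l2_vadd; auto; apply l2_vscale; auto).
    assert (Nw0 : nn w0 = 1 - m*m).
    { unfold w0. rewrite nn_vadd, nn_vscale, ip_scalr, Egq', Ng, Nq'; auto. unfold cnorm2, cmul, cconj; simpl. ring.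
      apply l2_vscale; auto. }
    assert (Hm1 : m*m <= 1) by (pose proof (nn_nonneg _ Lw0); lra).
    set (d := sqrt (1 - m*m)).
    assert (Hd2 : d*d = 1 - m*m) by (apply sqrt_sqrt; lra).
    assert (Hd0 : 0 <= d) by apply sqrt_pos.
    assert (Hphase : forall v, l2 v -> forall n, vscale (ip v q') q' n = vscale (ip v q) q n).
    { intros v Lv n. unfold q'. rewrite ip_scalr; auto. unfold vscale, cmul, cconj.
      destruct (ip v q) as [x y], (q n) as [z t]. unfold cnorm2 in Hph. destruct ph as [p1 p2]; simpl in *.
      f_equal.
      - transitivity ((p1*p1+p2*p2)*(x*z - y*t)); [ring | rewrite Hph; ring].
      - transitivity ((p1*p1+p2*p2)*(x*t + y*z)); [ring | rewrite Hph; ring]. }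
    assert (Hph2 : forall v, l2 v -> cnorm2 (ip v q') = cnorm2 (ip v q)).
    { intros v Lv. unfold q'. rewrite ip_scalr; auto. unfold cnorm2, cmul, cconj.
      destruct (ip v q) as [x y]. unfold cnorm2 in Hph. destruct ph as [p1 p2]; simpl in *.
      transitivity ((p1*p1+p2*p2)*(x*x+y*y)); [ring | rewrite Hph; ring]. }
    destruct (Req_dec d 0) as [Hd|Hd].
    + exists q', vzero, m, d. repeat split; auto.
      * apply l2_vzero.
      * unfold ip. f_equal; (transitivity (Series (fun _ => 0)); [apply Series_ext'; intros; unfold ipr, ipi, vzero, cmul; simpl; ring | apply Series_zero]).
      * intros; lra.
      * rewrite Hd. nra.
      * intros n. assert (w0 n = (0,0)) by (apply nn0; auto; rewrite Nw0; nra).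
        unfold w0, vadd, vscale, cmul, vzero in *; simpl in *. destruct (g n), (q' n); simpl in *.
        injection H as H1 H2. f_equal; nra.
    + assert (Hdp : 0 < d) by lra.
      set (u := vscale (/d, 0) w0).
      exists q', u, m, d. repeat split; auto.
      * apply l2_vscale; auto.
      * unfold u. rewrite ip_scall by auto. unfold w0. rewrite ip_addl by (auto; apply l2_vscale; auto).
        rewrite ip_scall by auto. rewrite Egq', Eqq. unfold cmul; simpl. f_equal; ring.
      * intros _. unfold u. rewrite nn_vscale, Nw0; auto. unfold cnorm2; simpl. rewrite <- Hd2. field. lra.
      * lra.
      * intros n. unfold u, w0, vadd, vscale, cmul; simpl. destruct (g n), (q' n); simpl. f_equal; field; lra.
Qed.

Lemma Rdiv_le_0_compat a b : 0 <= a -> 0 < b -> 0 <= a / b.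
Proof. intros. unfold Rdiv. apply Rmult_le_pos; auto. left; apply Rinv_0_lt_compat; auto. Qed.

Lemma twoD (c d al w : R) : 0 <= c -> 0 <= d -> c*c + d*d = 1 -> 0 <= al -> al < w -> w < 1 ->
  exists f1 f2 h1 h2 : R,
    f1*f1 + f2*f2 = 1 /\ h1*h1 + h2*h2 = 1 /\
    al*c*c + 1 = w*f1*f1 + (1+al-w)*h1*h1 /\
    al*c*d = w*f1*f2 + (1+al-w)*h1*h2 /\
    al*d*d = w*f2*f2 + (1+al-w)*h2*h2 /\
    (1+al-w)*h2*h2 <= w*al*d*d /\
    (d = 0 -> f2 = 0 /\ h2 = 0).
Proof.
  intros Hc Hd Hcd Hal Hw Hw1.
  destruct (Req_dec (al*d) 0) as [H0|H0].
  { exists 1, 0, 1, 0. assert (al = 0 \/ d = 0) as [->| ->] by (apply Rmult_integral; auto).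
    - repeat split; try ring; try (intros; lra); nra.
    - assert (c*c = 1) by nra. repeat split; try ring; try (intros; lra); nra. }
  assert (Hal' : 0 < al). { destruct Hal as [Hal|Hal]; auto. subst. exfalso; apply H0; ring. }
  assert (Hd' : 0 < d). { destruct Hd as [Hd|Hd]; auto. subst. exfalso; apply H0; ring. }
  set (a := al*(1-w)).
  assert (Ha : 0 < a) by (unfold a; nra).
  set (D := al*al*c*c + al*(1-w)*(w-al)).
  assert (HP : 0 <= al*(1-w)*(w-al)) by (apply Rmult_le_pos; [apply Rmult_le_pos|]; lra).
  assert (HD : 0 <= D).
  { unfold D.
    assert (0 <= (al*c)*(al*c)) by apply Rle_0_sqr. nra. }
  set (sD := sqrt D).
  assert (HsD : sD*sD = D) by (apply sqrt_sqrt; auto).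
  assert (HsD0 : 0 <= sD) by apply sqrt_pos.
  assert (HsDc : al*c <= sD).
  { apply Rsqr_incr_0_var. unfold Rsqr. rewrite HsD. unfold D. lra. auto. }
  set (t := (sD - al*c)/a).
  assert (Ht : 0 <= t) by (unfold t; apply Rdiv_le_0_compat; lra).
  assert (Hat : a*t = sD - al*c) by (unfold t; field; lra).
  assert (Hq2 : (sD + al*c)*t = w - al).
  { unfold t. replace ((sD + al * c) * ((sD - al * c) / a)) with ((sD*sD - (al*c)*(al*c))/a) by (field; lra).
    rewrite HsD. unfold D, a. field. split; lra. }
  assert (Hq : a*t*t + 2*al*c*t - (w - al) = 0).
  { rewrite Hat. lra. }
  set (N2 := 1 + 2*c*t + t*t).
  assert (HN2 : N2 = (c+t)*(c+t) + d*d) by (unfold N2; nra).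
  assert (HN2p : 0 < N2) by (rewrite HN2; nra).
  set (N := sqrt N2).
  assert (HN : N*N = N2) by (apply sqrt_sqrt; lra).
  assert (HNp : 0 < N) by (apply sqrt_lt_R0; lra).
  set (f1 := (c+t)/N). set (f2 := d/N).
  assert (Hf : f1*f1 + f2*f2 = 1).
  { unfold f1, f2. field_simplify; [|lra]. replace (N^2) with N2 by (simpl; rewrite Rmult_1_r; auto). rewrite HN2. field. lra. }
  assert (Hwt : w*(al*t*t+1) = al*N2) by (unfold N2; unfold a in Hq; lra).
  assert (Hkey : w*(al*(d*f1 - c*f2)*(d*f1-c*f2) + f2*f2) = al*d*d).
  { replace (w*(al*(d*f1 - c*f2)*(d*f1-c*f2) + f2*f2)) with (d*d*(w*(al*t*t+1))/(N*N)) by (unfold f1, f2; field; lra).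
    rewrite Hwt, HN. field. lra. }
  set (s := 1+al-w).
  assert (Hs : 0 < s) by (unfold s; lra).
  set (x := al*c*c + 1 - w*f1*f1).
  set (y := al*c*d - w*f1*f2).
  set (z := al*d*d - w*f2*f2).
  assert (Hx : 0 < x). { unfold x. assert (f1*f1 <= 1) by nra. nra. }
  assert (Hdet : x*z = y*y). { unfold x, y, z. nra. }
  set (h1 := sqrt (x/s)).
  assert (Hh1 : h1*h1 = x/s) by (apply sqrt_sqrt; apply Rdiv_le_0_compat; lra).
  assert (Hh1p : 0 < h1) by (apply sqrt_lt_R0; apply Rdiv_lt_0_compat; lra).
  set (h2 := y/(s*h1)).
  exists f1, f2, h1, h2.
  assert (E1 : s*h1*h1 = x) by (rewrite Rmult_assoc, Hh1; field; lra).
  assert (E2 : s*h1*h2 = y) by (unfold h2; field; lra).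
  assert (E3 : s*h2*h2 = z).
  { replace (s*h2*h2) with (y*y/(s*(h1*h1))) by (unfold h2; field; lra).
    rewrite Hh1. replace (s*(x/s)) with x by (field; lra). rewrite <- Hdet. field; lra. }
  repeat split.
  - exact Hf.
  - assert (s*(h1*h1+h2*h2) = s).
    { replace (s*(h1*h1+h2*h2)) with (s*h1*h1 + s*h2*h2) by ring. rewrite E1, E3.
      transitivity (al*(c*c+d*d) + 1 - w*(f1*f1+f2*f2)); [unfold x,z; ring | rewrite Hcd, Hf; unfold s; ring]. }
    apply (Rmult_eq_reg_l s); lra.
  - unfold x in E1. lra.
  - unfold y in E2. lra.
  - unfold z in E3. lra.
  - rewrite E3. unfold z.
    assert (Hf2 : f2*f2 = d*d/N2) by (unfold f2; rewrite <- HN; field; lra).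
    assert (Hct : 0 <= al*c*t) by (apply Rmult_le_pos; [apply Rmult_le_pos|]; lra).
    assert (Hatt : a*t*t <= w) by lra.
    assert (HB : al*(1-w)*N2 <= w).
    { replace (al*(1-w)*N2) with ((1-w)*(al*N2)) by ring. rewrite <- Hwt.
      replace ((1-w)*(w*(al*t*t+1))) with (w*(a*t*t + (1-w))) by (unfold a; ring).
      assert (0 <= w*(1 - (a*t*t + (1-w)))) by (apply Rmult_le_pos; lra). lra. }
    replace (w*f2*f2) with (w*(f2*f2)) by ring. rewrite Hf2.
    assert (HB2 : al*(1-w) <= w/N2).
    { apply (Rmult_le_reg_r N2); auto. replace (w/N2*N2) with w by (field; lra). lra. }
    assert (0 <= d*d) by apply Rle_0_sqr.
    assert (d*d*(al*(1-w)) <= d*d*(w/N2)) by (apply Rmult_le_compat_l; auto).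
    replace (w*(d*d/N2)) with (d*d*(w/N2)) by (field; lra). nra.
  - intros; lra.
  - intros; lra.
Qed.

Lemma quad_id (c d al w s f1 f2 h1 h2 x y : R) :
    al*c*c + 1 = w*f1*f1 + s*h1*h1 ->
    al*c*d = w*f1*f2 + s*h1*h2 ->
    al*d*d = w*f2*f2 + s*h2*h2 ->
  al*(c*x+d*y)*(c*x+d*y) + x*x = w*(f1*x+f2*y)*(f1*x+f2*y) + s*(h1*x+h2*y)*(h1*x+h2*y).
Proof. intros E1 E2 E3.
  transitivity ((al*c*c+1)*x*x + 2*(al*c*d)*x*y + (al*d*d)*y*y). ring.
  rewrite E1, E2, E3. ring. Qed.

Lemma decay_real (c d al w s h1 h2 x y : R) :
  0 <= al <= 1/2 -> 0 < w <= 1/2 -> 0 < s <= 3/2 -> h1*h1 + h2*h2 = 1 ->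
  s*h2*h2 <= w*al*d*d -> c*c + d*d = 1 ->
  s*(h1*x+h2*y)*(h1*x+h2*y) <= 3/4*al*(c*x+d*y)*(c*x+d*y) + 11*(x*x).
Proof. intros Hal Hw Hs Hh Hdec Hcd.
  set (a := h1*x). set (b := h2*y).
  assert (Hab : (a+b)*(a+b) <= 6/5*(b*b) + 6*(a*a)).
  { pose proof (Rle_0_sqr (5*a - b)). unfold Rsqr in *. lra. }
  assert (Hb : s*(b*b) <= w*al*(d*y)*(d*y)).
  { unfold b. replace (s*(h2*y*(h2*y))) with ((s*h2*h2)*(y*y)) by ring.
    replace (w*al*(d*y)*(d*y)) with ((w*al*d*d)*(y*y)) by ring.
    apply Rmult_le_compat_r. apply Rle_0_sqr. auto. }
  assert (Ha : s*(a*a) <= 3/2*(x*x)).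
  { unfold a. replace (s*(h1*x*(h1*x))) with ((s*(h1*h1))*(x*x)) by ring.
    apply Rmult_le_compat_r. apply Rle_0_sqr.
    assert (h1*h1 <= 1) by (pose proof (Rle_0_sqr h2); unfold Rsqr in *; lra).
    assert (0 <= h1*h1) by apply Rle_0_sqr. nra. }
  assert (Hcx : (c*x+d*y)*(c*x+d*y) >= 4/5*((d*y)*(d*y)) - 4*((c*x)*(c*x))).
  { pose proof (Rle_0_sqr (5*(c*x) + d*y)). unfold Rsqr in *. lra. }
  assert (Hc2 : (c*x)*(c*x) <= x*x).
  { replace ((c*x)*(c*x)) with ((c*c)*(x*x)) by ring.
    assert (c*c <= 1) by (pose proof (Rle_0_sqr d); unfold Rsqr in *; lra).
    assert (0 <= x*x) by apply Rle_0_sqr. nra. }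
  assert (Hdy : 0 <= (d*y)*(d*y)) by apply Rle_0_sqr.
  assert (Hwal : w*al <= 1/2*al) by nra.
  assert (H1 : s*((a+b)*(a+b)) <= s*(6/5*(b*b) + 6*(a*a))) by (apply Rmult_le_compat_l; lra).
  assert (H2 : w*al*((d*y)*(d*y)) <= 1/2*al*((d*y)*(d*y))) by (apply Rmult_le_compat_r; lra).
  assert (H3 : al*((c*x+d*y)*(c*x+d*y)) >= al*(4/5*((d*y)*(d*y)) - 4*((c*x)*(c*x)))).
  { apply Rle_ge. apply Rmult_le_compat_l; lra. }
  assert (H4 : al*((c*x)*(c*x)) <= 1/2*(x*x)).
  { assert (0 <= (c*x)*(c*x)) by apply Rle_0_sqr. assert (0 <= x*x) by apply Rle_0_sqr. nra. }
  replace (s*(h1*x+h2*y)*(h1*x+h2*y)) with (s*((a+b)*(a+b))) by (unfold a,b; ring).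
  replace (3/4*al*(c*x+d*y)*(c*x+d*y)) with (3/4*(al*((c*x+d*y)*(c*x+d*y)))) by ring.
  replace (w*al*(d*y)*(d*y)) with (w*al*((d*y)*(d*y))) in Hb by ring.
  clear -H1 H2 H3 H4 Hb Ha. clearbody a b. nra. Qed.

Definition pv (v x : vec) : vec := vscale (ip v x) x.

Lemma unit_of x : l2 x -> nn x = 1 -> sqnorm_is x 1.
Proof. intros L N. rewrite <- N. apply sq_nn; auto. Qed.

Lemma ip_rlin a b x y v : l2 x -> l2 y -> l2 v ->
  ip v (vadd (vscale (a,0) x) (vscale (b,0) y)) =
  (a * fst (ip v x) + b * fst (ip v y), a * snd (ip v x) + b * snd (ip v y)).
Proof. intros. rewrite ip_addr by (auto; apply l2_vscale; auto).
  rewrite !ip_scalr by auto. unfold cmul, cconj; simpl. f_equal; ring. Qed.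

Lemma nn_rlin a b x y : l2 x -> l2 y -> ip y x = (0,0) ->
  nn (vadd (vscale (a,0) x) (vscale (b,0) y)) = a*a*nn x + b*b*nn y.
Proof. intros Lx Ly H. rewrite nn_vadd by (apply l2_vscale; auto).
  rewrite !nn_vscale by auto. rewrite ip_scall by (auto; apply l2_vscale; auto).
  rewrite ip_scalr by auto. rewrite (ip_sym y x), H. unfold cnorm2, cmul, cconj; simpl. ring. Qed.

Lemma load_step g q al w : sqnorm_is g 1 -> sqnorm_is q 1 -> 0 <= al -> al < w -> w < 1 ->
  exists F H, sqnorm_is F 1 /\ sqnorm_is H 1 /\
   (forall v, l2 v -> forall n, vadd (rscale al (pv v g)) (pv v q) n =
                   vadd (rscale w (pv v F)) (rscale (1+al-w) (pv v H)) n) /\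
   (forall v, l2 v -> (1+al-w) * cnorm2 (ip v H) <= al * cnorm2 (ip v g) + cnorm2 (ip v q)) /\
   (w <= 1/2 -> forall v, l2 v -> (1+al-w) * cnorm2 (ip v H) <= 3/4 * (al * cnorm2 (ip v g)) + 11 * cnorm2 (ip v q)).
Proof.
  intros Hg Hq Hal Hw Hw1.
  destruct (decomp g q Hg Hq) as (q' & u & c & d & Lq' & Lu & Nq' & Ouq & Nu & Hc & Hd & Hcd & Eg & Hph & Hph2).
  destruct (twoD c d al w Hc Hd Hcd Hal Hw Hw1) as (f1 & f2 & h1 & h2 & Hf & Hh & E1 & E2 & E3 & Dec & Hd0).
  set (s := 1+al-w) in *.
  assert (Eg' : g = vadd (vscale (c,0) q') (vscale (d,0) u)) by (apply functional_extensionality; auto).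
  set (F := vadd (vscale (f1,0) q') (vscale (f2,0) u)).
  set (H := vadd (vscale (h1,0) q') (vscale (h2,0) u)).
  assert (LF : l2 F) by (apply l2_vadd; apply l2_vscale; auto).
  assert (LH : l2 H) by (apply l2_vadd; apply l2_vscale; auto).
  assert (Hnorm : forall a b, a*a+b*b = 1 -> (d = 0 -> b = 0) -> nn (vadd (vscale (a,0) q') (vscale (b,0) u)) = 1).
  { intros a b Hab Hb. rewrite nn_rlin; auto. rewrite Nq'. destruct (Req_dec d 0) as [D0|D0].
    - rewrite (Hb D0) in *. lra.
    - assert (0 < d) by (destruct Hd; [auto|congruence]). rewrite Nu by lra. lra. }
  exists F, H. split; [|split; [|split; [|split]]].
  - apply unit_of; auto. apply Hnorm; auto. intros; apply Hd0; auto.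
  - apply unit_of; auto. apply Hnorm; auto. intros; apply Hd0; auto.
  - intros v Lv n. assert (Hq' : pv v q n = pv v q' n) by (unfold pv; symmetry; apply Hph; auto).
    unfold vadd at 1. rewrite Hq'. unfold pv. rewrite Eg'. unfold F, H.
    rewrite !ip_rlin by auto.
    destruct (ip v q') as [x1 y1]. destruct (ip v u) as [x2 y2].
    unfold vadd, vscale, rscale, cmul; simpl.
    destruct (q' n) as [p1 p2]. destruct (u n) as [r1 r2]. simpl. f_equal.
    + transitivity ((al*c*c+1)*(x1*p1 - y1*p2) + (al*c*d)*((x1*r1-y1*r2) + (x2*p1 - y2*p2)) + (al*d*d)*(x2*r1-y2*r2)); [ring|].
      rewrite E1, E2, E3. ring.
    + transitivity ((al*c*c+1)*(x1*p2 + y1*p1) + (al*c*d)*((x1*r2+y1*r1) + (x2*p2 + y2*p1)) + (al*d*d)*(x2*r2+y2*r1)); [ring|].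
      rewrite E1, E2, E3. ring.
  - intros v Lv. rewrite <- (Hph2 v Lv). rewrite Eg'. unfold H. rewrite !ip_rlin by auto.
    destruct (ip v q') as [x1 y1]. destruct (ip v u) as [x2 y2]. unfold cnorm2; simpl.
    pose proof (quad_id c d al w s f1 f2 h1 h2 x1 x2 E1 E2 E3).
    pose proof (quad_id c d al w s f1 f2 h1 h2 y1 y2 E1 E2 E3).
    assert (0 <= w*((f1*x1+f2*x2)*(f1*x1+f2*x2))) by (apply Rmult_le_pos; [lra|apply Rle_0_sqr]).
    assert (0 <= w*((f1*y1+f2*y2)*(f1*y1+f2*y2))) by (apply Rmult_le_pos; [lra|apply Rle_0_sqr]).
    nra.
  - intros Hw2 v Lv. rewrite <- (Hph2 v Lv). rewrite Eg'. unfold H. rewrite !ip_rlin by auto.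
    destruct (ip v q') as [x1 y1]. destruct (ip v u) as [x2 y2]. unfold cnorm2; simpl.
    assert (Hs : 0 < s <= 3/2) by (unfold s; lra).
    pose proof (decay_real c d al w s h1 h2 x1 x2 ltac:(lra) ltac:(lra) Hs Hh Dec Hcd).
    pose proof (decay_real c d al w s h1 h2 y1 y2 ltac:(lra) ltac:(lra) Hs Hh Dec Hcd).
    nra.
Qed.

Record st := mk { sJ : nat; sb : R; sg : vec }.

Definition Ld (ee : nat -> vec) (s s' : st) (v : vec) : R :=
  if Nat.eq_dec (sJ s') (S (sJ s)) then cnorm2 (ip v (ee (sJ s))) else 0.
Definition Lv (ee : nat -> vec) (s s' : st) (v : vec) : vec :=
  if Nat.eq_dec (sJ s') (S (sJ s)) then pv v (ee (sJ s)) else vzero.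

Definition Rel (ee : nat -> vec) (s : st) (w : R) (s' : st) (F : vec) : Prop :=
  sqnorm_is (sg s') 1 /\ 0 <= sb s' < 1 /\ sqnorm_is F 1 /\
  INR (sJ s') - sb s' = INR (sJ s) - sb s + w /\ (sJ s' = sJ s \/ sJ s' = S (sJ s)) /\
  (forall v, l2 v -> forall n, vadd (rscale (sb s) (pv v (sg s))) (Lv ee s s' v) n =
                          vadd (rscale w (pv v F)) (rscale (sb s') (pv v (sg s'))) n) /\
  (forall v, l2 v -> sb s' * cnorm2 (ip v (sg s')) <= sb s * cnorm2 (ip v (sg s)) + 11 * Ld ee s s' v) /\
  (w <= 1/2 -> forall v, l2 v -> sb s' * cnorm2 (ip v (sg s')) <= (1 - w/2) * (sb s * cnorm2 (ip v (sg s))) + 11 * Ld ee s s' v).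

Definition valid (s : st) := sqnorm_is (sg s) 1 /\ 0 <= sb s < 1.

Lemma cnorm2_nonneg z : 0 <= cnorm2 z.
Proof. unfold cnorm2. destruct z as [a b]; simpl. nra. Qed.

Lemma Rel_ex ee s w : (forall j, sqnorm_is (ee j) 1) -> valid s -> 0 < w < 1 -> exists s' F, Rel ee s w s' F.
Proof.
  intros Hee [Hg Hb] Hw. destruct s as [J b g]; simpl in *.
  destruct (Rle_lt_dec w b) as [Hwb|Hwb].
  - exists (mk J (b-w) g), g. unfold Rel, Ld, Lv; cbn [sJ sb sg].
    destruct (Nat.eq_dec J (S J)) as [E|_]; [lia|].
    repeat split; auto; try lra.
    + intros v Lv n. unfold vadd, rscale, vscale, vzero, cmul; simpl. f_equal; ring.
    + intros v Lv. pose proof (cnorm2_nonneg (ip v g)). nra.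
    + intros Hw2 v Lv. pose proof (cnorm2_nonneg (ip v g)).
      assert (0 <= (w - w*b/2) * cnorm2 (ip v g)) by (apply Rmult_le_pos; nra). nra.
  - destruct (load_step g (ee J) b w Hg (Hee J) ltac:(lra) Hwb ltac:(lra)) as (F & H & HF & HH & Id & D1 & D2).
    exists (mk (S J) (1+b-w) H), F. unfold Rel, Ld, Lv; cbn [sJ sb sg].
    destruct (Nat.eq_dec (S J) (S J)) as [_|E]; [|lia].
    repeat split; auto; try lra.
    + rewrite S_INR. lra.
    + intros v Lv. specialize (D1 v Lv). pose proof (cnorm2_nonneg (ip v (ee J))). lra.
    + intros Hw2 v Lv. specialize (D2 Hw2 v Lv). pose proof (cnorm2_nonneg (ip v (ee J))).
      pose proof (cnorm2_nonneg (ip v g)). assert (0 <= b * cnorm2 (ip v g)) by (apply Rmult_le_pos; lra).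
      nra.
Qed.

Definition nxt (ee : nat -> vec) (xi : nat -> R) (s : st) (k : nat) : st * vec :=
  epsilon (inhabits (s, vzero)) (fun p => Rel ee s (xi k) (fst p) (snd p)).
Fixpoint sts ee xi (k : nat) : st :=
  match k with O => mk 0 0 (ee 0%nat) | S k' => fst (nxt ee xi (sts ee xi k') k') end.
Definition Fk ee xi k := snd (nxt ee xi (sts ee xi k) k).

Lemma sts_ok ee xi : (forall j, sqnorm_is (ee j) 1) -> (forall k, 0 < xi k < 1) ->
  forall k, valid (sts ee xi k) /\ Rel ee (sts ee xi k) (xi k) (sts ee xi (S k)) (Fk ee xi k).
Proof.
  intros Hee Hxi.
  assert (H : forall k, valid (sts ee xi k) -> Rel ee (sts ee xi k) (xi k) (sts ee xi (S k)) (Fk ee xi k)).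
  { intros k Hv. simpl. unfold Fk, nxt.
    apply (epsilon_spec (inhabits (sts ee xi k, vzero)) (fun p => Rel ee (sts ee xi k) (xi k) (fst p) (snd p))).
    destruct (Rel_ex ee (sts ee xi k) (xi k) Hee Hv (Hxi k)) as (s' & F & HR). exists (s', F). exact HR. }
  induction k.
  - assert (valid (sts ee xi 0)) by (split; simpl; auto; lra). split; auto.
  - destruct IHk as [_ HR]. assert (valid (sts ee xi (S k))).
    { destruct HR as (A & B & _). split; auto. }
    split; auto.
Qed.

Lemma psum_S T v n : psum T v (S n) = vadd (psum T v n) (T n v).
Proof. reflexivity. Qed.

Lemma invariant (ee : nat -> vec) (xi : nat -> R) (E : nat -> op) v :
  (forall j, sqnorm_is (ee j) 1) -> (forall k, 0 < xi k < 1) ->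
  (forall j, E j v = pv v (ee j)) -> l2 v ->
  forall k n, psum (fun j v => rscale (xi j) (pv v (Fk ee xi j))) v k n =
    vsub (psum E v (sJ (sts ee xi k))) (rscale (sb (sts ee xi k)) (pv v (sg (sts ee xi k)))) n.
Proof.
  intros Hee Hxi HE Lv0 k. induction k; intros n.
  - simpl. unfold vzero, vsub, rscale, vscale, cmul; simpl. f_equal; ring.
  - destruct (sts_ok ee xi Hee Hxi k) as [_ (_ & _ & _ & _ & HJ & Id & _)].
    specialize (Id v Lv0 n). rewrite psum_S. unfold vadd at 1. rewrite IHk.
    set (s := sts ee xi k) in *. set (s' := sts ee xi (S k)) in *.
    assert (HP : psum E v (sJ s') n = vadd (psum E v (sJ s)) (Lv ee s s' v) n).
    { unfold Lv. destruct (Nat.eq_dec (sJ s') (S (sJ s))) as [e|ne].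
      - rewrite e, psum_S, HE. reflexivity.
      - destruct HJ as [HJ|HJ]; [|congruence]. rewrite HJ. unfold vadd, vzero; simpl.
        destruct (psum E v (sJ s) n); simpl; f_equal; ring. }
    unfold vsub. rewrite HP. unfold vadd in *.
    pose proof (f_equal fst Id) as I1; pose proof (f_equal snd Id) as I2; cbn [fst snd] in I1, I2. cbn [fst snd]. f_equal; lra.
Qed.

Lemma fsum_mono f k k' : (forall i, 0 <= f i) -> (k <= k')%nat -> fsum f k <= fsum f k'.
Proof. intros H Hk. induction Hk. lra. simpl. specialize (H m). lra. Qed.

Lemma fsum_le f g k : (forall i, f i <= g i) -> fsum f k <= fsum g k.
Proof. intros H. induction k; simpl. lra. specialize (H k). lra. Qed.

Lemma prod_step (y S R0 rk L : R) : 0 <= y <= 1/4 -> 0 <= S -> 0 <= R0 -> 0 <= L -> 0 <= rk ->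
  rk <= R0 / (1 + S) + 11 * L -> (1 - y) * rk <= R0 / (1 + (S + y)) + 11 * L.
Proof. intros Hy HS HR HL Hr H.
  assert (A : (1-y) * (R0/(1+S)) <= R0/(1+(S+y))).
  { unfold Rdiv. rewrite <- Rmult_assoc, (Rmult_comm (1-y)), Rmult_assoc.
    apply Rmult_le_compat_l; auto.
    apply (Rmult_le_reg_r ((1+S)*(1+(S+y)))). nra.
    replace ((1 - y) * / (1 + S) * ((1 + S) * (1 + (S + y)))) with ((1-y)*(1+(S+y))) by (field; lra).
    replace (/ (1 + (S + y)) * ((1 + S) * (1 + (S + y)))) with (1+S) by (field; lra). nra. }
  assert ((1-y)*rk <= (1-y)*(R0/(1+S) + 11*L)) by (apply Rmult_le_compat_l; lra).
  assert ((1-y)*(11*L) <= 11*L) by nra.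
  lra. Qed.

Lemma decay_abstract (r m Lam : nat -> R) :
  (forall k, 0 <= r k) -> (forall k, 0 <= m k <= 1/2) -> (forall k, Lam k <= Lam (S k)) ->
  (forall k, r (S k) <= (1 - m k/2) * r k + 11 * (Lam (S k) - Lam k)) ->
  (forall B, exists k, fsum m k > B) ->
  (forall eps, eps > 0 -> exists K, forall k k', (K <= k)%nat -> (k <= k')%nat -> Lam k' - Lam k < eps) ->
  forall eps, eps > 0 -> exists K, forall k, (K <= k)%nat -> r k < eps.
Proof.
  intros Hr Hm HL Hstep Hdiv HC eps He.
  assert (HLm : forall k k', (k <= k')%nat -> Lam k <= Lam k').
  { intros k k' Hk. induction Hk. lra. specialize (HL m0). lra. }
  assert (Hms : forall k k', (k <= k')%nat -> fsum m k <= fsum m k').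
  { intros. apply fsum_mono; auto. intros i; destruct (Hm i); lra. }
  assert (Prod : forall k0 j, r (k0 + j)%nat <= r k0 / (1 + (fsum m (k0+j) - fsum m k0)/2) + 11 * (Lam (k0+j)%nat - Lam k0)).
  { intros k0 j. induction j.
    - rewrite Nat.add_0_r. replace (fsum m k0 - fsum m k0) with 0 by ring.
      replace (1 + 0/2) with 1 by field. replace (r k0/1) with (r k0) by field. lra.
    - replace (k0 + S j)%nat with (S (k0 + j)) by lia.
      specialize (Hstep (k0+j)%nat). simpl fsum.
      pose proof (Hm (k0+j)%nat).
      assert (0 <= (fsum m (k0+j) - fsum m k0)/2) by (assert (fsum m k0 <= fsum m (k0+j)) by (apply Hms; lia); lra).
      assert (0 <= Lam (k0+j)%nat - Lam k0) by (assert (Lam k0 <= Lam (k0+j)%nat) by (apply HLm; lia); lra).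
      pose proof (prod_step (m (k0+j)%nat / 2) ((fsum m (k0+j) - fsum m k0)/2) (r k0) (r (k0+j)%nat)
          (Lam (k0+j)%nat - Lam k0) ltac:(lra) H0 (Hr k0) H1 (Hr _) IHj).
      replace ((fsum m (k0 + j) + m (k0 + j)%nat - fsum m k0) / 2) with
        ((fsum m (k0+j) - fsum m k0)/2 + m (k0+j)%nat/2) by field.
      specialize (HL (k0+j)%nat). lra. }
  destruct (HC (eps/44) ltac:(lra)) as [K0 HK0].
  set (R0 := r K0).
  destruct (Hdiv (fsum m K0 + 4 * R0 / eps)) as [K1 HK1].
  exists (max K0 K1). intros k Hk.
  assert (Hk0 : (K0 <= k)%nat) by lia.
  specialize (Prod K0 (k - K0)%nat). replace (K0 + (k - K0))%nat with k in Prod by lia. fold R0 in Prod.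
  assert (HLk : Lam k - Lam K0 < eps/44) by (apply HK0; lia).
  assert (Hfk : fsum m K1 <= fsum m k) by (apply Hms; lia).
  set (X := (fsum m k - fsum m K0)/2) in *.
  assert (HX : X >= 2 * R0 / eps) by (unfold X; unfold Rdiv in *; lra).
  assert (HR0 : 0 <= R0) by apply Hr.
  assert (HXp : 0 <= X) by (assert (0 <= 2*R0/eps) by (apply Rmult_le_pos; [lra | left; apply Rinv_0_lt_compat; lra]); lra).
  assert (Hq : R0 / (1 + X) <= eps/2).
  { apply (Rmult_le_reg_r (1+X)). lra. replace (R0/(1+X)*(1+X)) with R0 by (field; lra).
    assert (R0 <= eps/2 * X).
    { apply (Rmult_le_reg_r (2/eps)). apply Rmult_lt_0_compat; [lra | apply Rinv_0_lt_compat; lra].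
      replace (eps/2*X*(2/eps)) with X by (field; lra). unfold Rdiv in *. lra. }
    nra. }
  lra.
Qed.

Lemma ip_zero_l y : ip vzero y = (0,0).
Proof. unfold ip. f_equal; (transitivity (Series (fun _ => 0)); [apply Series_ext'; intros; unfold ipr, ipi, vzero, cmul; simpl; ring | apply Series_zero]). Qed.

Lemma l2_pv v x : l2 x -> l2 (pv v x).
Proof. intros. unfold pv. apply l2_vscale; auto. Qed.

Lemma l2_ext x y : l2 x -> (forall n, x n = y n) -> l2 y.
Proof. intros H E. replace y with x; auto. apply functional_extensionality; auto. Qed.


Lemma Lee (ee : nat -> vec) (Hee : forall j, sqnorm_is (ee j) 1) j : l2 (ee j).
Proof. apply unit_l2; auto. Qed.

Definition aa (ee : nat -> vec) (v : vec) j := cnorm2 (ip v (ee j)).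

Lemma psumE_l2 (E : nat -> op) (ee : nat -> vec) (v : vec) (Hee : forall j, sqnorm_is (ee j) 1) (HE : forall j, E j v = pv v (ee j)) (Lv : l2 v) n : l2 (psum E v n).
Proof. assert (Lee' := Lee ee Hee). induction n. apply l2_vzero. rewrite psum_S, HE. apply l2_vadd; auto. apply l2_pv. auto. Qed.

Lemma psumE_ip (E : nat -> op) (ee : nat -> vec) (v : vec) (Hee : forall j, sqnorm_is (ee j) 1) (HE : forall j, E j v = pv v (ee j)) (Lv : l2 v) n : fst (ip (psum E v n) v) = fsum (aa ee v) n.
Proof. assert (Lee' := Lee ee Hee). assert (PL := psumE_l2 E ee v Hee HE Lv). induction n. change (psum E v 0) with vzero. rewrite ip_zero_l. auto.
  rewrite psum_S, HE. rewrite ip_addl by (try apply PL; try apply l2_pv; auto).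
  cbn [fst]. rewrite IHn. change (fsum (aa ee v) (S n)) with (fsum (aa ee v) n + aa ee v n). f_equal.
  unfold pv. rewrite ip_scall by auto. rewrite (ip_sym v (ee n)). unfold aa, cmul, cconj, cnorm2.
  destruct (ip v (ee n)); simpl; ring. Qed.

Lemma Av_l2 (E : nat -> op) (ee : nat -> vec) (A : op) (v : vec) (Hee : forall j, sqnorm_is (ee j) 1) (HE : forall j, E j v = pv v (ee j)) (Lv : l2 v) (hA : norm_cv (psum E v) (A v)) : l2 (A v).
Proof. destruct (hA 1 ltac:(lra)) as [N HN]. destruct (HN N ltac:(lia)) as [l [Hl _]].
  apply l2_ext with (vsub (psum E v N) (vsub (psum E v N) (A v))).
  apply l2_vsub. apply (psumE_l2 E ee v Hee HE Lv). exists l; auto.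
  intros n. unfold vsub. destruct (psum E v N n), (A v n); simpl; f_equal; ring. Qed.

Lemma aa_nonneg ee v j : 0 <= aa ee v j.
Proof. apply cnorm2_nonneg. Qed.

Lemma aa_bounded (E : nat -> op) (ee : nat -> vec) (A : op) (v : vec) (Hee : forall j, sqnorm_is (ee j) 1) (HE : forall j, E j v = pv v (ee j)) (Lv : l2 v) (hA : norm_cv (psum E v) (A v)) : exists B, forall n, fsum (aa ee v) n <= B.
Proof.
  destruct (hA 1 ltac:(lra)) as [N HN].
  assert (H : forall n, (n >= N)%nat -> fsum (aa ee v) n <= (2 + 2 * nn (A v) + nn v)/2).
  { intros n Hn. destruct (HN n Hn) as [l [Hl Hl1]].
    rewrite <- (psumE_ip E ee v Hee HE Lv). eapply Rle_trans. apply Rle_abs. eapply Rle_trans. apply ipr_half; auto. apply (psumE_l2 E ee v Hee HE Lv).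
    assert (L1 : l2 (vsub (psum E v n) (A v))) by (exists l; auto).
    assert (nn (psum E v n) <= 2 * l + 2 * nn (A v)).
    { replace (psum E v n) with (vsub (vsub (psum E v n) (A v)) (vscale (-1,0) (A v))).
      eapply Rle_trans. apply nn_vsub_le; auto. apply l2_vscale, (Av_l2 E ee A v Hee HE Lv hA).
      rewrite nn_vscale by apply (Av_l2 E ee A v Hee HE Lv hA). rewrite (sq_uniq _ _ Hl). unfold cnorm2; simpl. lra.
      apply functional_extensionality; intros k. unfold vsub, vscale, cmul. destruct (psum E v n k), (A v k); simpl; f_equal; ring. }
    lra. }
  exists ((2 + 2 * nn (A v) + nn v)/2). intros n. destruct (Compare_dec.le_lt_dec N n) as [Hn|Hn].
  - apply H; auto.
  - eapply Rle_trans. apply fsum_mono with (k' := N). apply aa_nonneg. lia. apply H; lia.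
Qed.

Lemma aa_cauchy (E : nat -> op) (ee : nat -> vec) (A : op) (v : vec) (Hee : forall j, sqnorm_is (ee j) 1) (HE : forall j, E j v = pv v (ee j)) (Lv : l2 v) (hA : norm_cv (psum E v) (A v)) : forall eps, eps > 0 -> exists N, forall n m, (N <= n)%nat -> (n <= m)%nat -> fsum (aa ee v) m - fsum (aa ee v) n < eps.
Proof.
  intros eps He. destruct (aa_bounded E ee A v Hee HE Lv hA) as [B HB].
  assert (C : Cauchy_crit (fsum (aa ee v))).
  { apply CV_Cauchy. apply growing_cv. intros n; simpl. pose proof (aa_nonneg ee v n); lra.
    exists B. intros x [i ->]. apply HB. }
  destruct (C eps He) as [N HN]. exists N. intros n m Hn Hm.
  specialize (HN m n ltac:(lia) ltac:(lia)). unfold Rdist in HN.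
  pose proof (Rle_abs (fsum (aa ee v) m - fsum (aa ee v) n)). lra.
Qed.

Lemma fsum_plus f g K : fsum (fun k => f k + g k) K = fsum f K + fsum g K.
Proof. induction K; simpl. ring. rewrite IHK. ring. Qed.
Lemma fsum_ext f g K : (forall k, f k = g k) -> fsum f K = fsum g K.
Proof. intros H. induction K; simpl; auto. rewrite IHK, H. auto. Qed.
Lemma fsum_ind k0 c K : (k0 < K)%nat -> fsum (fun k => if Nat.eq_dec k k0 then c else 0) K = c.
Proof. intros H. induction K. lia. simpl. destruct (Nat.eq_dec K k0).
  - subst. replace (fsum (fun k => if Nat.eq_dec k k0 then c else 0) k0) with 0. ring.
    clear. assert (forall m, (m <= k0)%nat -> fsum (fun k => if Nat.eq_dec k k0 then c else 0) m = 0).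
    { induction m; intros; simpl; auto. destruct (Nat.eq_dec m k0). lia. rewrite IHm; [ring|lia]. }
    symmetry; apply H; lia.
  - rewrite IHK by lia. ring. Qed.

Definition mwf (s : nat -> (nat + nat)%type) (xi : nat -> R) k :=
  match s k with inl _ => xi k | inr _ => 0 end.

Lemma mass_div (s : nat -> (nat + nat)%type) (xi mu : nat -> R) (M : option nat) :
  (forall k k', s k = s k' -> k = k') ->
  (forall k j, s k = inl j -> below j M /\ xi k = mu j) ->
  (forall j, below j M -> exists k, s k = inl j) ->
  (forall j, below j M -> 0 < mu j) ->
  diverges mu M -> forall B, exists K, fsum (mwf s xi) K > B.
Proof.
  intros Hinj Hs Hcov Hmu Hdiv B.
  destruct (Hdiv B) as [n [Hb HB]].
  set (g := fun n' k => match s k with inl j => if Compare_dec.lt_dec j n' then mu j else 0 | inr _ => 0 end).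
  assert (C1 : forall n' K, fsum (g n') K <= fsum (mwf s xi) K).
  { intros n' K. apply fsum_le. intros k. unfold g, mwf. destruct (s k) as [j|j] eqn:E; [|lra].
    destruct (Hs k j E) as [Hb0 Hx]. destruct (Compare_dec.lt_dec j n'). lra. specialize (Hmu j Hb0). lra. }
  assert (C2 : forall n', (n' <= n)%nat -> exists K, forall K', (K <= K')%nat -> fsum (g n') K' = fsum mu n').
  { induction n'; intros Hn.
    - exists 0%nat. intros K' _. simpl. transitivity (fsum (fun _ => 0) K').
      apply fsum_ext. intros k. unfold g. cbv beta. destruct (s k) as [j|j]; [|auto]. destruct (Compare_dec.lt_dec j 0); [lia|auto].
      clear. induction K'; simpl; auto. rewrite IHK'. ring.
    - destruct (IHn' ltac:(lia)) as [K HK]. destruct (Hcov n' (Hb n' ltac:(lia))) as [k0 Hk0].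
      exists (max K (S k0)). intros K' HK'.
      transitivity (fsum (fun k => g n' k + (if Nat.eq_dec k k0 then mu n' else 0)) K').
      + apply fsum_ext. intros k. unfold g. destruct (s k) as [n0|n0] eqn:E.
        * destruct (Nat.eq_dec k k0) as [e|ne].
          { subst. rewrite Hk0 in E. injection E as <-. destruct (Compare_dec.lt_dec n' (S n')); [|lia].
            destruct (Compare_dec.lt_dec n' n'); [lia|]. ring. }
          destruct (Compare_dec.lt_dec n0 (S n')); destruct (Compare_dec.lt_dec n0 n'); try ring; try lia.
          assert (n0 = n') by lia. subst. exfalso. apply ne. apply Hinj. congruence.
        * destruct (Nat.eq_dec k k0); [subst; congruence|]. ring.
      + rewrite fsum_plus, HK by lia. rewrite fsum_ind by lia. simpl. ring. }
  destruct (C2 n ltac:(lia)) as [K HK]. exists K. specialize (HK K ltac:(lia)). specialize (C1 n K). lra.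
Qed.

Lemma inner_uniq v e c : l2 v -> l2 e -> inner_is v e c -> c = ip v e.
Proof. intros Lv Le [H1 H2]. destruct c as [c1 c2]. unfold ip. simpl in *. f_equal.
  symmetry; apply is_series_unique; apply is_series_Reals; auto.
  symmetry; apply is_series_unique; apply is_series_Reals; auto. Qed.

Theorem lemma3p4 (A : op) (E : nat -> op)
  (hE : forall j, rank_one_proj (E j)) (hA : sot_sum E A)
  (M N : option nat) (mu lam : nat -> R)
  (hmu : forall j, below j M -> 0 < mu j <= 1/2)
  (hlam : forall j, below j N -> 0 < lam j < 1/2)
  (xi : nat -> R) (hxi : merges xi mu M lam N)
  (hdiv : diverges mu M) :
  Adm A xi.
Proof.
  destruct hxi as (s & sinj & sval & scovM & scovN).
  assert (Hxi : forall k, 0 < xi k < 1).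
  { intros k. specialize (sval k). destruct (s k) as [j|j]; destruct sval as [Hb Hx]; rewrite Hx.
    specialize (hmu j Hb); lra. specialize (hlam j Hb); lra. }
  set (ee := fun j => proj1_sig (constructive_indefinite_description _ (hE j))).
  assert (Hee : forall j, sqnorm_is (ee j) 1 /\ forall v, l2 v -> exists c, inner_is v (ee j) c /\ E j v = vscale c (ee j)).
  { intros j. unfold ee. destruct (constructive_indefinite_description _ (hE j)) as [e He]. simpl. exact He. }
  assert (Hee1 : forall j, sqnorm_is (ee j) 1) by (intros; apply Hee).
  assert (HEv : forall j v, l2 v -> E j v = pv v (ee j)).
  { intros j v Lv. destruct (proj2 (Hee j) v Lv) as [c [Hc Ev]]. rewrite Ev. unfold pv.
    rewrite (inner_uniq v (ee j) c); auto. apply unit_l2; auto. }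
  pose proof (sts_ok ee xi Hee1 Hxi) as OK.
  set (J := fun k => sJ (sts ee xi k)).
  set (mw := mwf s xi).
  assert (Hmw : forall k, (mw k = 0) \/ (mw k = xi k /\ xi k <= 1/2)).
  { intros k. unfold mw, mwf. specialize (sval k). destruct (s k) as [j|j]; auto.
    right. destruct sval as [Hb Hx]. split; auto. rewrite Hx. apply hmu; auto. }
  assert (Hmw2 : forall k, 0 <= mw k <= xi k).
  { intros k. destruct (Hmw k) as [H|[H _]]; rewrite H; pose proof (Hxi k); lra. }
  assert (Hms : forall B, exists K, fsum mw K > B).
  { apply (mass_div s xi mu M); auto.
    - intros k j Hk. specialize (sval k). rewrite Hk in sval. auto.
    - intros j Hj. apply hmu; auto. }
  assert (Hmass : forall k, INR (J k) - sb (sts ee xi k) = fsum xi k).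
  { induction k. simpl. unfold J. simpl. ring.
    destruct (OK k) as [_ (_ & _ & _ & HI & _)]. unfold J in *. rewrite HI, IHk. simpl. ring. }
  assert (HJmono : forall k, (J k <= J (S k))%nat).
  { intros k. destruct (OK k) as [_ (_ & _ & _ & _ & HJ & _)]. unfold J. lia. }
  assert (HJmono' : forall k k', (k <= k')%nat -> (J k <= J k')%nat).
  { intros k k' H. induction H. lia. specialize (HJmono m). lia. }
  assert (HJunb : forall n, exists K, forall k, (K <= k)%nat -> (n <= J k)%nat).
  { intros n. destruct (Hms (INR n)) as [K HK]. exists K. intros k Hk.
    assert (fsum mw K <= fsum mw k) by (apply fsum_mono; [intros; apply Hmw2 | auto]).
    assert (fsum mw k <= fsum xi k) by (apply fsum_le; intros; apply Hmw2).
    destruct (OK k) as [[_ Hb] _]. specialize (Hmass k).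
    assert (INR n < INR (J k)) by lra. apply INR_lt in H1. lia. }
  split; [intros j; pose proof (Hxi j); lra|]. split; [exists 1; intros j; pose proof (Hxi j); lra|].
  exists (fun k v => pv v (Fk ee xi k)). split.
  { intros k. exists (Fk ee xi k). destruct (OK k) as [_ (_ & _ & HF & _)]. split; auto.
    intros v Lv. exists (ip v (Fk ee xi k)). split; auto. apply inner_ip; auto. apply unit_l2; auto. }
  intros v Lv.
  assert (HE : forall j, E j v = pv v (ee j)) by (intros; apply HEv; auto).
  assert (hAv : norm_cv (psum E v) (A v)) by (apply hA; auto).
  set (r := fun k => sb (sts ee xi k) * cnorm2 (ip v (sg (sts ee xi k)))).
  assert (Hr0 : forall eps, eps > 0 -> exists K, forall k, (K <= k)%nat -> r k < eps).
  { apply (decay_abstract r mw (fun k => fsum (aa ee v) (J k))).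
    - intros k. unfold r. destruct (OK k) as [[_ Hb] _]. apply Rmult_le_pos. lra. apply cnorm2_nonneg.
    - intros k. pose proof (Hmw2 k). pose proof (Hxi k). destruct (Hmw k) as [H3|[H3 H4]]; lra.
    - intros k. apply fsum_mono. apply aa_nonneg. auto.
    - intros k. destruct (OK k) as [_ (_ & _ & _ & _ & HJ & _ & D1 & D2)].
      assert (HL : Ld ee (sts ee xi k) (sts ee xi (S k)) v = fsum (aa ee v) (J (S k)) - fsum (aa ee v) (J k)).
      { unfold Ld, J. destruct (Nat.eq_dec (sJ (sts ee xi (S k))) (S (sJ (sts ee xi k)))) as [e|ne].
        - rewrite e. simpl. unfold aa. ring.
        - destruct HJ as [HJ|HJ]; [|congruence]. rewrite HJ. ring. }
      unfold r. rewrite <- HL. destruct (Hmw k) as [H|[H1 H2]].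
      + rewrite H. replace (1 - 0/2) with 1 by field. rewrite Rmult_1_l. apply D1; auto.
      + rewrite H1. apply D2; auto.
    - auto.
    - intros eps He. destruct (aa_cauchy E ee A v Hee1 HE Lv hAv eps He) as [N0 HN0].
      destruct (HJunb N0) as [K HK]. exists K. intros k k' Hk Hk'.
      apply HN0. apply HK; auto. apply HJmono'; auto. }
  intros eps He.
  destruct (hAv (eps/4) ltac:(lra)) as [N1 HN1].
  destruct (HJunb N1) as [K2 HK2].
  destruct (Hr0 (eps/4) ltac:(lra)) as [K3 HK3].
  exists (max K2 K3). intros k Hk.
  destruct (HN1 (J k) ltac:(apply HK2; lia)) as [l [Hl Hl4]].
  specialize (HK3 k ltac:(lia)).
  set (b := sb (sts ee xi k)) in *. set (g := sg (sts ee xi k)) in *.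
  destruct (OK k) as [[Hg Hb] _].
  set (X := rscale b (pv v g)).
  assert (LX : l2 X) by (apply l2_vscale, l2_pv, unit_l2; auto).
  assert (LD : l2 (vsub (psum E v (J k)) (A v))) by (exists l; auto).
  set (W := psum (fun j v0 => rscale (xi j) (pv v0 (Fk ee xi j))) v k).
  assert (EW : vsub W (A v) = vsub (vsub (psum E v (J k)) (A v)) X).
  { apply functional_extensionality. intros n. unfold vsub at 1 3. unfold W.
    rewrite (invariant ee xi E v Hee1 Hxi HE Lv k n). fold b g. fold X. unfold J.
    unfold vsub. destruct (psum E v (sJ (sts ee xi k)) n), (A v n), (X n); simpl; f_equal; ring. }
  exists (nn (vsub W (A v))). split.
  - apply sq_nn. rewrite EW. apply l2_vsub; auto.
  - rewrite EW. eapply Rle_lt_trans. apply nn_vsub_le; auto.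
    rewrite (sq_uniq _ _ Hl).
    assert (nn X <= r k).
    { unfold X, rscale, pv. rewrite nn_vscale by (apply l2_vscale, unit_l2; auto).
      rewrite nn_vscale by (apply unit_l2; auto). replace (nn g) with 1 by (symmetry; apply unit_nn; auto). unfold r. fold b g.
      unfold cnorm2 at 1; simpl. pose proof (cnorm2_nonneg (ip v g)).
      assert (Hb2 : 0 <= b < 1) by exact Hb. assert (0 <= b*(1-b)*cnorm2 (ip v g)) by (apply Rmult_le_pos; [apply Rmult_le_pos|]; lra). nra. }
    lra.
Qed.
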